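(* Let $F,G$ be signatures on the same finite variable set $V$ such that the pair $(F,G)$ is linearly independent, but for every partial configuration $p$ of $V$ with $\mathrm{dom}(p)\ne\emptyset$ the pair $(F_p,G_p)$ is linearly dependent. Then there is a configuration $x\in\mathrm{supp}(F)$ such that $\mathrm{supp}(F)\cup\mathrm{supp}(G)=\{x,\overline{x}\}$.
   Context: A signature on a finite set $V$ is a function $F:\{0,1\}^V\to\mathbb{R}_{\ge0}$; $\mathrm{supp}(F)=\{x:F(x)\ne0\}$. A pair $(F,G)$ of signatures on $V$ is linearly dependent if there exist reals $\lambda,\mu$, not both zero, with $\lambda F=\mu G$; otherwise linearly independent. A partial configuration $p$ of $V$ is an element of $\{0,1\}^{\mathrm{dom}(p)}$, $\mathrm{dom}(p)\subseteq V$; the pinning $F_p$ is the signature on $V\setminus\mathrm{dom}(p)$ given by $F_p(x)=F(x,p)$, where $(x,p)$ is the common extension. $\overline{x}$ denotes the complement, $\overline{x}_i=1-x_i$. *)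

(* Defs.v *)
From HB Require Import structures.
From mathcomp Require Import all_boot all_order all_algebra.
Set Implicit Arguments. Unset Strict Implicit. Unset Printing Implicit Defensive.
Import Order.TTheory GRing.Theory Num.Theory.
Local Open Scope ring_scope.

Definition config (V : finType) := {ffun V -> bool}.

(* A signature on V with values in R (nonnegativity is a separate hypothesis). *)
Definition signature (R : Type) (V : finType) := config V -> R.

Definition nonneg_sig (R : realFieldType) (V : finType) (F : signature R V) :=
  forall x, 0 <= F x.

Definition subvars (V : finType) (D : {set V}) := {v : V | v \in D}.

Definition pconfig (V : finType) (D : {set V}) := {ffun subvars D -> bool}.

(* Common extension (x, p) of a configuration x of V \ D and p of D. *)
Definition extend (V : finType) (D : {set V}) (p : pconfig D)
  (x : config (subvars (~: D))) : config V :=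
  [ffun v => match (insub v : option (subvars D)) with
             | Some d => p d
             | None => match (insub v : option (subvars (~: D))) with
                       | Some e => x e
                       | None => false
                       end
             end].

Definition pin (R : Type) (V : finType) (D : {set V}) (F : signature R V)
  (p : pconfig D) : signature R (subvars (~: D)) :=
  fun x => F (extend p x).

Definition lin_dep (R : realFieldType) (V : finType) (F G : signature R V) :=
  exists lam mu : R, (lam != 0 \/ mu != 0) /\ (forall x, lam * F x = mu * G x).

Definition supp (R : realFieldType) (V : finType) (F : signature R V) : {set config V} :=
  [set x | F x != 0].

Definition cconj (V : finType) (x : config V) : config V := [ffun i => ~~ x i].

(* Main.v *)
Require Import Defs.
From HB Require Import structures.
From mathcomp Require Import all_boot all_order all_algebra.
From mathcomp Require Import ring lra.
Import Order.TTheory GRing.Theory Num.Theory.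
Local Open Scope ring_scope.

Section Aux.
Variables (R : realFieldType) (V : finType) (F G : signature R V).

Definition Kf (y w : config V) : R := F y * G w - F w * G y.

Lemma extend_restr (D : {set V}) (y : config V) (b : bool) :
  (forall u, u \in D -> y u = b) ->
  extend [ffun _ : subvars D => b] [ffun e : subvars (~: D) => y (val e)] = y.
Proof.
move=> Hb; apply/ffunP => u; rewrite ffunE.
case: insubP => [d Hd Hval|Hn].
  by rewrite ffunE Hb.
case: insubP => [e He Hval|Hn']; first by rewrite ffunE Hval.
by rewrite inE Hn in Hn'.
Qed.

Lemma Kf_same (v : V) (y w : config V) :
  (forall (D : {set V}) (p : pconfig D), D != set0 -> lin_dep (pin F p) (pin G p)) ->
  y v = w v -> Kf y w = 0.
Proof.
move=> Hp Hyw.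
have HD : [set v] != set0 :> {set V}.
  by apply/set0Pn; exists v; rewrite inE.
have [lam [mu [Hnz Heq]]] := Hp _ [ffun _ => y v] HD.
have Ey := Heq [ffun e : subvars (~: [set v]) => y (val e)].
have Ew := Heq [ffun e : subvars (~: [set v]) => w (val e)].
rewrite /pin extend_restr in Ey; last by move=> u; rewrite inE => /eqP ->.
rewrite /pin Hyw extend_restr in Ew; last by move=> u; rewrite inE => /eqP ->.
rewrite /Kf.
have H1 : lam * (F y * G w - F w * G y) = 0.
  have -> : lam * (F y * G w - F w * G y) = (lam * F y) * G w - (lam * F w) * G y by ring.
  by rewrite Ey Ew; ring.
have H2 : mu * (F y * G w - F w * G y) = 0.
  have -> : mu * (F y * G w - F w * G y) = F y * (mu * G w) - F w * (mu * G y) by ring.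
  by rewrite -Ey -Ew; ring.
case: Hnz => /negPf Hn.
  by move/eqP: H1; rewrite mulf_eq0 Hn => /eqP.
by move/eqP: H2; rewrite mulf_eq0 Hn => /eqP.
Qed.

Lemma indep_K : ~ lin_dep F G -> exists y z, Kf y z != 0.
Proof.
move=> Hnd.
case: (boolP [exists y, exists z, Kf y z != 0]).
  by move=> /existsP [y /existsP [z Hz]]; exists y, z.
rewrite negb_exists => /forallP Hall.
exfalso; apply: Hnd.
case: (boolP [exists y, F y != 0]).
  move=> /existsP [y0 Hy0]; exists (G y0), (F y0); split; first by right.
  move=> x; have := Hall y0; rewrite negb_exists => /forallP /(_ x).
  by rewrite negbK /Kf subr_eq0 => /eqP ->; ring.
rewrite negb_exists => /forallP H0.
exists 1, 0; split; first by left; rewrite oner_eq0.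
by move=> x; have := H0 x; rewrite negbK => /eqP ->; rewrite mul0r mulr0.
Qed.

End Aux.
Arguments Kf_same {R V F G v y w}.
Arguments indep_K {R V F G}.

Theorem mainTheorem7 (R : realFieldType) (V : finType) (F G : signature R V) :
  nonneg_sig F -> nonneg_sig G ->
  ~ lin_dep F G ->
  (forall (D : {set V}) (p : pconfig D), D != set0 -> lin_dep (pin F p) (pin G p)) ->
  exists x : config V, x \in supp F /\ supp F :|: supp G = [set x; cconj x].
Proof.
move=> _ _ Hnd Hp.
have [y [z Hyz]] := indep_K Hnd.
have Hz : z = cconj y.
  apply/ffunP => i; rewrite ffunE.
  case: (boolP (y i == z i)) => [/eqP E|].
    by move: Hyz; rewrite (Kf_same Hp E) eqxx.
  by case: (y i); case: (z i).
have Hcc : forall x : config V, cconj (cconj x) = x.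
  by move=> x; apply/ffunP => i; rewrite !ffunE negbK.
have HS : supp F :|: supp G = [set y; z].
  apply/setP => w; rewrite !inE.
  case: (boolP (w == y)) => [/eqP ->|Hwy].
    rewrite ?eqxx ?orbT /=.
    case: (boolP (F y == 0)) => //= /eqP Fy; apply: contraNT Hyz => /negPn /eqP Gy.
    by rewrite /Kf Fy Gy; apply/eqP; ring.
  case: (boolP (w == z)) => [/eqP ->|Hwz].
    rewrite /=.
    case: (boolP (F z == 0)) => //= /eqP Fz; apply: contraNT Hyz => /negPn /eqP Gz.
    by rewrite /Kf Fz Gz; apply/eqP; ring.
  rewrite /=; apply/negbTE; rewrite negb_or !negbK.
  have [i Hi] : exists i, w i != y i.
    apply/existsP; move: Hwy; apply: contraR; rewrite negb_exists => /forallP H.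
    by apply/eqP/ffunP => i; move: (H i); rewrite negbK => /eqP.
  have [j Hj] : exists j, w j != z j.
    apply/existsP; move: Hwz; apply: contraR; rewrite negb_exists => /forallP H.
    by apply/eqP/ffunP => j; move: (H j); rewrite negbK => /eqP.
  have K1 : Kf R V F G w z = 0.
    apply: (Kf_same (v := i) Hp); rewrite Hz ffunE.
    by move: Hi; case: (w i); case: (y i).
  have K2 : Kf R V F G y w = 0.
    apply: (Kf_same (v := j) Hp); move: Hj; rewrite Hz ffunE.
    by case: (w j); case: (y j).
  move: K1 K2 Hyz; rewrite /Kf => /eqP; rewrite subr_eq0 => /eqP K1 /eqP.
  rewrite subr_eq0 => /eqP K2 Hyz.
  have E1 : G w * (F y * G z - F z * G y) = 0.
    have -> : G w * (F y * G z - F z * G y) = (F y * G w) * G z - F z * G w * G y by ring.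
    by rewrite K2 -K1; ring.
  have E2 : F w * (F y * G z - F z * G y) = 0.
    have -> : F w * (F y * G z - F z * G y) = F y * (F w * G z) - F z * (F w * G y) by ring.
    by rewrite K1 -K2; ring.
  apply/andP; split; apply/eqP.
    by move/eqP: E2; rewrite mulf_eq0 (negPf Hyz) orbF => /eqP.
  by move/eqP: E1; rewrite mulf_eq0 (negPf Hyz) orbF => /eqP.
case: (boolP (F y == 0)) => [/eqP Fy|Fy].
  exists z; split.
    rewrite inE; apply: contraNT Hyz => /negPn /eqP Fz.
    by rewrite /Kf Fy Fz; apply/eqP; ring.
  by rewrite HS Hz Hcc setUC.
by exists y; split; [rewrite inE | rewrite HS Hz].
Qed.
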